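(* Let $\tau=\{\tau_1,\dots,\tau_n\}$ be an implicit-deadline sporadic task set with $\tau_i=(T_i,C_i,T_i)$, $T_i$ positive integers and $0<C_i\le T_i$, and let $m$ be a positive integer. Then $\tau$ is schedulable on $m$ identical unit-capacity processors by the VC-IDT algorithm if and only if $$\sum_{i=1}^n\frac{C_i}{T_i}\le m.$$
   Context: Sporadic task $\tau_i=(T_i,C_i,T_i)$: it releases jobs at arbitrary real times separated by at least $T_i$. Each job needs at most $C_i$ units of execution within $T_i$ time units of its release, and never executes on two processors simultaneously. VC-IDT algorithm: - Let $\Pi=\gcd(T_1,\dots,T_n)$ and $\Theta_i=\Pi C_i/T_i$. - For each $i$ create a periodic server task $(\Pi,\Theta_i,\Pi)$; this is the MPR interface $\langle\Pi,\Theta_i,1\rangle$ of a one-processor virtual cluster containing only $\tau_i$. - Schedule the server tasks on the $m$ processors with McNaughton's algorithm. In every window $(j\Pi,(j+1)\Pi]$, taking the servers in a fixed order, fill processor $1$ starting at $j\Pi$. When processor $p$ is filled up to $(j+1)\Pi$, the rest of the current server's $\Theta_i$ units go on processor $p+1$ starting at $j\Pi$. - Whenever server $i$ is scheduled, the processor time it receives is used to execute pending jobs of $\tau_i$ in earliest-deadline-first order. $\tau$ is schedulable by VC-IDT if this procedure produces a valid schedule on $m$ processors in which every job of every admissible arrival sequence meets its deadline. *)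

(* Defs.v *)
From HB Require Import structures.
From mathcomp Require Import all_boot all_order all_algebra.
From mathcomp Require Import all_classical all_reals all_analysis.

Set Implicit Arguments.
Unset Strict Implicit.
Unset Printing Implicit Defensive.

Import Order.TTheory GRing.Theory Num.Theory.
Local Open Scope ring_scope.
Local Open Scope classical_set_scope.

Section VCIDT.
Variable R : realType.

Definition vc_Pi (n : nat) (T : 'I_n -> nat) : nat := \big[gcdn/0%N]_(i < n) T i.

(* Theta_i = Pi * C_i / T_i : budget of the periodic server of task i *)
Definition vc_Theta (n : nat) (T : 'I_n -> nat) (C : 'I_n -> R) (i : 'I_n) : R :=
  (vc_Pi T)%:R * C i / (T i)%:R.

Definition vc_prefix (n : nat) (T : 'I_n -> nat) (C : 'I_n -> R) (i : 'I_n) : R :=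
  \sum_(k < n | (k < i)%N) vc_Theta T C k.

(* McNaughton's wrap-around schedule of the server tasks (Pi, Theta_i, Pi):
   in window (j Pi, (j+1) Pi], the servers are laid consecutively on the
   "stretched" line, processor p covering positions (p Pi, (p+1) Pi]; the
   instant j Pi + o (0 < o <= Pi) on processor p corresponds to position
   p Pi + o.  Server i occupies positions (prefix_i, prefix_i + Theta_i].
   [vc_server_on T C i p t] : server i executes on processor p (0-indexed)
   at instant t. *)
Definition vc_server_on (n : nat) (T : 'I_n -> nat) (C : 'I_n -> R)
    (i : 'I_n) (p : nat) (t : R) : Prop :=
  exists j : int,
    (j%:~R * (vc_Pi T)%:R < t <= (j + 1)%:~R * (vc_Pi T)%:R) /\
    (vc_prefix T C i < p%:R * (vc_Pi T)%:R + (t - j%:~R * (vc_Pi T)%:R)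
       <= vc_prefix T C i + vc_Theta T C i).

Definition vc_valid_schedule (n : nat) (T : 'I_n -> nat) (C : 'I_n -> R)
    (m : nat) : Prop :=
  [/\ (forall i p t, vc_server_on T C i p t -> (p < m)%N),
      (forall i p p' t, vc_server_on T C i p t -> vc_server_on T C i p' t -> p = p')
    & (forall i i' p t, vc_server_on T C i p t -> vc_server_on T C i' p t -> i = i')].

Definition vc_server_active (n : nat) (T : 'I_n -> nat) (C : 'I_n -> R)
    (i : 'I_n) : set R :=
  [set t | exists p, vc_server_on T C i p t].

(* Admissible job sequence of a sporadic task (Ti, Ci, Ti): job k is released
   at r k, successive releases are separated by at least Ti, and job k needs
   e k <= Ci units of execution.  (Finite sequences are represented by
   padding with jobs of zero execution requirement.) *)
Definition sporadic_arrivals (Ti : nat) (Ci : R) (r e : nat -> R) : Prop :=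
  (forall k, r k + Ti%:R <= r k.+1) /\ (forall k, 0 <= e k <= Ci).

(* x k u = amount of execution job k has received before instant u. *)
Definition job_pending (r e : nat -> R) (x : nat -> R -> R) (k : nat) (u : R) : Prop :=
  r k <= u /\ x k u < e k.

Definition edf_runs (A : set R) (Ti : nat) (r e : nat -> R)
    (x : nat -> R -> R) (k : nat) (u : R) : Prop :=
  A u /\ job_pending r e x k u /\
  (forall k', job_pending r e x k' u -> r k + Ti%:R <= r k' + Ti%:R).

Definition edf_schedule (A : set R) (Ti : nat) (r e : nat -> R)
    (x : nat -> R -> R) : Prop :=
  forall k t,
    measurable [set u : R | u < t /\ edf_runs A Ti r e x k u] /\
    (x k t)%:E = lebesgue_measure [set u : R | u < t /\ edf_runs A Ti r e x k u].

Definition VC_IDT_schedulable (n : nat) (T : 'I_n -> nat) (C : 'I_n -> R)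
    (m : nat) : Prop :=
  vc_valid_schedule T C m /\
  forall (i : 'I_n) (r e : nat -> R) (x : nat -> R -> R),
    sporadic_arrivals (T i) (C i) r e ->
    edf_schedule (vc_server_active T C i) (T i) r e x ->
    forall k, e k <= x k (r k + (T i)%:R).

End VCIDT.

(* Main.v *)
Require Import Defs.
From HB Require Import structures.
From mathcomp Require Import all_boot all_order all_algebra.
From mathcomp Require Import all_classical all_reals all_analysis.
From mathcomp Require Import ring lra.
Import Order.TTheory GRing.Theory Num.Theory.
Local Open Scope ring_scope.
Local Open Scope classical_set_scope.

Lemma leb_oo (R : realType) (x y : R) : x <= y ->
  lebesgue_measure (`]x, y[ : set R) = (y - x)%:E.
Proof.
move=> xy; rewrite lebesgue_measure_itv /= lte_fin.
case: ifP => [_|]; first by rewrite EFinB.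
move/negbT; rewrite -leNgt => yx.
have -> : y = x by apply/eqP; rewrite eq_le yx xy.
by rewrite subrr.
Qed.
Lemma window (R : realType) (P s Th a : R) (S : set R) :
  0 < P -> 0 <= Th <= P -> measurable S ->
  (forall (k : int) u, a <= u < a + P ->
     k%:~R * P + s < u <= k%:~R * P + s + Th -> S u) ->
  (Th%:E <= lebesgue_measure (S `&` `[a%R, (a + P)%R[))%E.
Proof.
move=> P0 /andP[Th0 ThP] mS HS.
have mW : measurable (S `&` `[a, a + P[) by apply: measurableI.
have [->|Thpos] := eqVneq Th 0; first exact: measure_ge0.
have {Thpos} Thpos : 0 < Th by rewrite lt_def Thpos Th0.
set k0 := Num.floor ((a - s) / P).
set st0 := k0%:~R * P + s.
have [fl1 fl2] : st0 <= a /\ a < st0 + P.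
  have /andP[h1 h2] := Num.Theory.floor_itv ((a - s) / P).
  rewrite -/k0 intrD in h2.
  rewrite ler_pdivlMr // in h1; rewrite ltr_pdivrMr // in h2.
  rewrite /st0; split; lra.
have Hk1 : (k0 + 1)%:~R * P + s = st0 + P by rewrite intrD /st0; lra.
have [Hc|Hc] := leP Th (a - st0).
  apply: (@le_trans _ _ (lebesgue_measure (`]st0 + P, st0 + P + Th[ : set R))).
    by rewrite leb_oo; [rewrite lee_fin; lra | lra].
  apply: le_measure; rewrite ?inE //.
  move=> u /=; rewrite !in_itv /= => /andP[u1 u2]; split.
    apply: (HS (k0 + 1)); apply/andP; split; lra.
  apply/andP; split; lra.
apply: (@le_trans _ _ (lebesgue_measure (`]a, st0 + Th[ `|` `]st0 + P, a + P[ : set R))).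
  rewrite measureU //; last first.
    apply/seteqP; split => // u /= []; rewrite !in_itv /= => /andP[u1 u2] /andP[u3 u4].
    lra.
  rewrite /= (@leb_oo R a (st0+Th)); last lra. rewrite (@leb_oo R (st0+P) (a+P)); last lra.
  by rewrite -EFinD lee_fin; lra.
apply: le_measure; rewrite ?inE //; first exact: measurableU.
move=> u /= []; rewrite !in_itv /= => /andP[u1 u2]; split.
- apply: (HS k0); rewrite -/st0; apply/andP; split; lra.
- apply/andP; split; lra.
- apply: (HS (k0 + 1)); apply/andP; split; lra.
- apply/andP; split; lra.
Qed.

Lemma windows (R : realType) (P s Th a : R) (S : set R) (q : nat) :
  0 < P -> 0 <= Th <= P -> measurable S ->
  (forall (k : int) u, a <= u < a + q%:R * P ->
     k%:~R * P + s < u <= k%:~R * P + s + Th -> S u) ->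
  ((q%:R * Th)%:E <= lebesgue_measure (S `&` `[a%R, (a + q%:R * P)%R[))%E.
Proof.
move=> P0 Th0 mS; elim: q => [|q IH] HS.
  by rewrite mul0r; exact: measure_ge0.
have q0 : (0 : R) <= q%:R by exact: ler0n.
have IH' : ((q%:R * Th)%:E <= lebesgue_measure (S `&` `[a%R, (a + q%:R * P)%R[))%E.
  apply: IH => k u /andP[u1 u2]; apply: HS; apply/andP; split => //.
  rewrite mulrSr; nra.
have W : (Th%:E <= lebesgue_measure (S `&` `[(a + q%:R * P)%R, (a + q%:R * P + P)%R[))%E.
  apply: window => // k u /andP[u1 u2]; apply: HS; apply/andP; split; rewrite ?mulrSr; nra.
apply: (@le_trans _ _ (lebesgue_measure ((S `&` `[a%R, (a + q%:R * P)%R[) `|`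
   (S `&` `[(a + q%:R * P)%R, (a + q%:R * P + P)%R[)))).
  rewrite measureU; first last.
  - apply/seteqP; split => // u /= [] [_]; rewrite !in_itv /= => /andP[u1 u2] [_] /andP[u3 u4].
    lra.
  - exact: measurableI.
  - exact: measurableI.
  by rewrite -natr1 mulrDl mul1r EFinD; apply: leeD.
apply: le_measure; rewrite ?inE //.
- by apply: measurableU; apply: measurableI.
- exact: measurableI.
move=> u /= [] [Su]; rewrite !in_itv /= => /andP[u1 u2]; split => //;
  rewrite mulrSr; apply/andP; split; nra.
Qed.

Lemma pi_dvd {n} (T : 'I_n -> nat) i : (vc_Pi T %| T i)%N.
Proof. by apply: (biggcdn_inf i). Qed.

Lemma pi_gt0 {n} (T : 'I_n -> nat) i : (0 < T i)%N -> (0 < vc_Pi T)%N.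
Proof. by move=> h; move: (pi_dvd T i); apply: dvdn_gt0. Qed.

Lemma Theta_bounds {R : realType} {n} (T : 'I_n -> nat) (C : 'I_n -> R) i :
  (0 < T i)%N -> 0 < C i <= (T i)%:R ->
  0 < vc_Theta T C i <= (vc_Pi T)%:R.
Proof.
move=> Tp /andP[C0 CT].
have P0 : (0 : R) < (vc_Pi T)%:R by rewrite ltr0n (pi_gt0 _ _ Tp).
have T0 : (0 : R) < (T i)%:R by rewrite ltr0n.
have ct : C i / (T i)%:R <= 1 by rewrite ler_pdivrMr // mul1r.
have ct0 : 0 < C i / (T i)%:R by rewrite divr_gt0.
rewrite /vc_Theta -mulrA; apply/andP; split; first by rewrite mulr_gt0.
by rewrite ler_piMr // ltW.
Qed.

Lemma preS {R : realType} {n} (T : 'I_n -> nat) (C : 'I_n -> R) i :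
  vc_prefix T C i + vc_Theta T C i = \sum_(k < n | (k < i.+1)%N) vc_Theta T C k.
Proof.
rewrite (bigD1 i) //= addrC; congr (_ + _); apply: eq_bigl => k /=.
by rewrite ltnS ltn_neqAle andbC.
Qed.

Lemma pre_le {R : realType} {n} (T : 'I_n -> nat) (C : 'I_n -> R) (i i' : 'I_n) :
  (forall k, 0 <= vc_Theta T C k) -> (i < i')%N ->
  vc_prefix T C i + vc_Theta T C i <= vc_prefix T C i'.
Proof.
move=> h0 ii; rewrite preS /vc_prefix big_mkcond [X in _ <= X]big_mkcond /=.
apply: ler_sum => k _; case: ifP => h1; case: ifP => h2 //.
by move: h2; rewrite (leq_trans h1 ii).
Qed.

Lemma pre_tot {R : realType} {n} (T : 'I_n -> nat) (C : 'I_n -> R) i :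
  (forall k, 0 <= vc_Theta T C k) ->
  vc_prefix T C i + vc_Theta T C i <= \sum_(k < n) vc_Theta T C k.
Proof.
move=> h0; rewrite preS big_mkcond /=.
by apply: ler_sum => k _; case: ifP.
Qed.

Lemma pre_last {R : realType} {n} (T : 'I_n.+1 -> nat) (C : 'I_n.+1 -> R) :
  vc_prefix T C ord_max + vc_Theta T C ord_max = \sum_(k < n.+1) vc_Theta T C k.
Proof.
by rewrite preS; apply: eq_bigl => k; rewrite ltn_ord.
Qed.

Lemma sumTheta {R : realType} {n} (T : 'I_n -> nat) (C : 'I_n -> R) :
  \sum_(k < n) vc_Theta T C k = (vc_Pi T)%:R * \sum_(k < n) C k / (T k)%:R.
Proof. by rewrite mulr_sumr; apply: eq_bigr => k _; rewrite /vc_Theta mulrA. Qed.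

Lemma win_unique {R : realType} {P t : R} {j j' : int} : 0 < P ->
  j%:~R * P < t <= (j + 1)%:~R * P -> j'%:~R * P < t <= (j' + 1)%:~R * P -> j = j'.
Proof.
move=> P0 /andP[h1 h2] /andP[h3 h4].
have a1 : j%:~R * P < (j' + 1)%:~R * P by apply: lt_le_trans h4.
have a2 : j'%:~R * P < (j + 1)%:~R * P by apply: lt_le_trans h2.
rewrite ltr_pM2r // ltr_int ltzD1 in a1.
rewrite ltr_pM2r // ltr_int ltzD1 in a2.
by apply/eqP; rewrite eq_le a1 a2.
Qed.

Lemma active_of_I {R : realType} {n} (T : 'I_n -> nat) (C : 'I_n -> R) i (k : int) u :
  (0 < vc_Pi T)%N -> 0 <= vc_prefix T C i ->
  k%:~R * (vc_Pi T)%:R + vc_prefix T C i < u <=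
    k%:~R * (vc_Pi T)%:R + vc_prefix T C i + vc_Theta T C i ->
  vc_server_active T C i u.
Proof.
move=> Pp s0 /andP[h1 h2].
set P := (vc_Pi T)%:R in h1 h2 *.
have P0 : (0 : R) < P by rewrite ltr0n.
set j := Num.ceil (u / P) - 1.
have /andP[c1 c2] := Num.Theory.ceil_itv (u / P).
rewrite -/j in c1.
have hj1 : (j + 1) = Num.ceil (u / P) by rewrite /j subrK.
rewrite -hj1 in c2.
rewrite ltr_pdivlMr // in c1; rewrite ler_pdivrMr // in c2.
have kj : k <= j.
  rewrite -ltzD1 hj1 Num.Theory.ceil_gt_int ltr_pdivlMr //; lra.
exists `|j - k|%N, j.
have pE : (`|j - k|%N)%:R = j%:~R - k%:~R :> R.
  by rewrite natr_absz ger0_norm ?subr_ge0 // intrB.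
rewrite pE; split; first by apply/andP; split.
apply/andP; split; rewrite mulrBl; lra.
Qed.

Lemma edf_ok {R : realType} {n} (T : 'I_n -> nat) (C : 'I_n -> R) (i : 'I_n)
  (r e : nat -> R) (x : nat -> R -> R) :
  (forall i, (0 < T i)%N) ->
  (forall i, 0 < C i <= (T i)%:R) ->
  sporadic_arrivals (T i) (C i) r e ->
  edf_schedule (vc_server_active T C i) (T i) r e x ->
  forall k, e k <= x k (r k + (T i)%:R).
Proof.
move=> Tpos Cb [Hr He] Hedf.
set A := vc_server_active T C i in Hedf *.
set Ti := (T i)%:R.
have Pp := pi_gt0 T i (Tpos i).
set P : R := (vc_Pi T)%:R.
have P0 : 0 < P by rewrite ltr0n.
have Ti0 : 0 < Ti by rewrite ltr0n.
have Th0 : forall k, 0 <= vc_Theta T C k.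
  by move=> k; have /andP[h _] := Theta_bounds T C k (Tpos k) (Cb k); apply: ltW.
have ThB := Theta_bounds T C i (Tpos i) (Cb i).
set q := (T i %/ vc_Pi T)%N.
have TqP : Ti = q%:R * P by rewrite /Ti /P -natrM divnK // pi_dvd.
have qTh : q%:R * vc_Theta T C i = C i.
  rewrite /vc_Theta -/P; have : Ti != 0 by rewrite gt_eqF.
  rewrite -/Ti TqP => h; field.
  by move: h; rewrite mulf_eq0 negb_or andbC.
have mono : forall k u t, u <= t -> x k u <= x k t.
  move=> k u t ut; have [m1 e1] := Hedf k u; have [m2 e2] := Hedf k t.
  rewrite -lee_fin e1 e2; apply: le_measure; rewrite ?inE //.
  by move=> v /= [vu hv]; split => //; apply: lt_le_trans ut.
have rmono : forall k d, r k + d%:R * Ti <= r (k + d)%N.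
  move=> k; elim=> [|d IH]; first by rewrite mul0r addr0 addn0.
  rewrite addnS; have := Hr (k + d)%N; rewrite -/Ti -natr1; lra.
have rle : forall k k', (k <= k')%N -> r k <= r k'.
  move=> k k' /subnKC <-; have := rmono k (k' - k)%N.
  have : 0 <= (k' - k)%:R * Ti by rewrite mulr_ge0 // ltW.
  lra.
have rlt : forall k k', (k < k')%N -> r k + Ti <= r k'.
  move=> k k' kk; have := rle k.+1 k' kk; have := Hr k; rewrite -/Ti; lra.
elim/ltn_ind => k IH.
rewrite leNgt; apply/negP => Hlt.
have [mS eS] := Hedf k (r k + Ti).
set S := [set u | u < r k + Ti /\ edf_runs A (T i) r e x k u] in mS eS.
have Hw : forall (kk : int) u, r k <= u < r k + q%:R * P ->
    kk%:~R * P + vc_prefix T C i < u <= kk%:~R * P + vc_prefix T C i + vc_Theta T C i ->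
    S u.
  move=> kk u /andP[u1 u2] hI; rewrite -TqP in u2.
  split => //; split.
    apply: (active_of_I T C i kk) => //.
    by rewrite /vc_prefix; apply: sumr_ge0 => ? _.
  split.
    split => //; apply: le_lt_trans Hlt; apply: mono; lra.
  move=> k' [rk' xk'].
  have [kk'|] := ltnP k' k.
    have := IH k' kk'; have := mono k' (r k' + Ti) u.
    have := rlt k' k kk'; lra.
  by move=> /rle; rewrite /Ti; lra.
have ThB' : 0 <= vc_Theta T C i <= P.
  by case/andP: ThB => a b; rewrite b (ltW a).
have W := @windows R P (vc_prefix T C i) (vc_Theta T C i) (r k) S q P0 ThB' mS Hw.
have h1 : (lebesgue_measure (S `&` `[r k, (r k + q%:R * P)%R[) <= lebesgue_measure S)%E.
  apply: le_measure; rewrite ?inE //; first exact: measurableI.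
have := le_trans W h1; rewrite -eS qTh lee_fin => h2.
have /andP[_ ek] := He k; lra.
Qed.

Theorem theorem6 (R : realType) (n : nat) (T : 'I_n -> nat) (C : 'I_n -> R)
    (m : nat) :
  (0 < m)%N ->
  (forall i, (0 < T i)%N) ->
  (forall i, 0 < C i <= (T i)%:R) ->
  VC_IDT_schedulable T C m <-> \sum_(i < n) C i / (T i)%:R <= m%:R.
Proof.
move=> m0 Tpos Cb.
have Th0 : forall k, 0 <= vc_Theta T C k.
  by move=> k; have /andP[h _] := Theta_bounds T C k (Tpos k) (Cb k); apply: ltW.
split.
  move=> [[V1 V2 V3] _].
  rewrite leNgt; apply/negP => HU.
  case: n T C Tpos Cb Th0 V1 V2 V3 HU => [|n'] T C Tpos Cb Th0 V1 V2 V3 HU.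
    by move: HU; rewrite big_ord0 ltNge ler0n.
  set U := \sum_(i < n'.+1) C i / (T i)%:R in HU.
  set i : 'I_n'.+1 := ord_max.
  have Pp := pi_gt0 T i (Tpos i).
  set P : R := (vc_Pi T)%:R.
  have P0 : 0 < P by rewrite ltr0n.
  have /andP[c1 c2] := Num.Theory.ceil_itv U.
  have cm : (m%:Z < Num.ceil U) by rewrite Num.Theory.ceil_gt_int.
  have c0 : 0 < Num.ceil U by apply: le_lt_trans cm.
  have cpos : 0 <= Num.ceil U - 1 by rewrite subr_ge0 -gtz0_ge1.
  set p := `|Num.ceil U - 1|%N.
  have pE : p%:R = (Num.ceil U - 1)%:~R :> R by rewrite natr_absz ger0_norm.
  have pm : (m <= p)%N.
    by rewrite -lez_nat abszE ger0_norm // -ltzD1 subrK.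
  have := pre_last T C; rewrite sumTheta -/U -/P => hl.
  have ThB := Theta_bounds T C i (Tpos i) (Cb i).
  have : (p < m)%N.
    apply: (V1 i p (P * U - p%:R * P)); exists 0; rewrite add0r !mulr0z mul0r subr0 mulr1z mul1r -/i -/P.
    have e1 : (Num.ceil U - 1)%:~R = (Num.ceil U)%:~R - 1 :> R by rewrite intrB.
    rewrite pE e1 in c1 *.
    split; first by apply/andP; split; nra.
    case/andP: ThB => ? ?; apply/andP; split; lra.
  by rewrite ltnNge pm.
move=> HU; split; last by move=> i r e x; apply: edf_ok.
split.
- move=> i p t [j [/andP[h1 h2] /andP[h3 h4]]].
  have Pp := pi_gt0 T i (Tpos i).
  have P0 : (0 : R) < (vc_Pi T)%:R by rewrite ltr0n.
  have ht := pre_tot T C i Th0; rewrite sumTheta in ht.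
  have hm : (vc_Pi T)%:R * \sum_(i < n) C i / (T i)%:R <= (vc_Pi T)%:R * m%:R.
    by rewrite ler_pM2l.
  rewrite -(@ltr_nat R); rewrite -(ltr_pM2r P0); nra.
- move=> i p p' t [j [hj /andP[h3 h4]]] [j' [hj' /andP[h3' h4']]].
  have Pp := pi_gt0 T i (Tpos i).
  have P0 : (0 : R) < (vc_Pi T)%:R by rewrite ltr0n.
  have jj := win_unique P0 hj hj'; subst j'.
  have /andP[_ ThP] := Theta_bounds T C i (Tpos i) (Cb i).
  apply/eqP; rewrite eqn_leq; apply/andP; split.
    rewrite -ltnS -(@ltr_nat R) -natr1; nra.
  rewrite -ltnS -(@ltr_nat R) -natr1; nra.
- move=> i i' p t [j [hj /andP[h3 h4]]] [j' [hj' /andP[h3' h4']]].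
  have Pp := pi_gt0 T i (Tpos i).
  have P0 : (0 : R) < (vc_Pi T)%:R by rewrite ltr0n.
  have jj := win_unique P0 hj hj'; subst j'.
  case: (ltngtP i i') => [ii|ii|ii]; last exact: val_inj.
  + exfalso; have := pre_le T C _ _ Th0 ii; lra.
  + exfalso; have := pre_le T C _ _ Th0 ii; lra.
Qed.
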